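(* Assume $\Lambda=\Lambda^{\rm h}=A\mathbb Z^d$, $d=\mathsf d_s\in\{2,3\}$, $x(\ell)=\ell$, $u_0\equiv0$, and that the homogeneous site strain potential $V^{\rm h}$ satisfies (S.R), (S.L) and (S.PS). Then for every $u\in\dot{\mathscr U}^{\rm c}(\Lambda^{\rm h})$ the map $(\ell,\rho)\mapsto V^{\rm h}_{,\rho}(0)\cdot D_\rho u(\ell)$ belongs to $\ell^1(\Lambda^{\rm h}\times\Lambda^{\rm h}_* )$ and $$\sum_{\ell\in\Lambda^{\rm h}}\sum_{\rho\in\Lambda^{\rm h}_*}V^{\rm h}_{,\rho}(0)^{\rm T}D_\rho u(\ell)=0.$$
   Context: $B_R$ is the open ball of radius $R$ at $0$. $A\in\mathbb R^{d\times d}$ nonsingular, $\Lambda^{\rm h}:=A\mathbb Z^d$, $\Lambda^{\rm h}_*:=\Lambda^{\rm h}\setminus\{0\}$. For $u:\Lambda^{\rm h}\to\mathbb R^d$: $D_\rho u(\ell):=u(\ell+\rho)-u(\ell)$, $Du(\ell):=(D_\rho u(\ell))_{\rho\in\Lambda^{\rm h}_*}$; $\dot{\mathscr U}^{\rm c}(\Lambda^{\rm h})$ is the set of $u$ constant outside some ball. For $k>0$, $\mathscr L_k$ is the set of monotonically decreasing $\mathfrak w:[0,\infty)\to(0,\infty)$ with $\|\mathfrak w\|_{L^\infty}+\int_0^\infty r^{k+d-1}\mathfrak w(r)dr<\infty$. For $\mathfrak m,\lambda>0$, $\mathscr A_{\mathfrak m,\lambda}(\Lambda^{\rm h})$ is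 the set of $y:\Lambda^{\rm h}\to\mathbb R^d$ with $B_\lambda(z)\cap y(\Lambda^{\rm h})\neq\emptyset$ for all $z$ and $|y(\ell)-y(m)|\ge\mathfrak m|\ell-m|$; $\mathscr A$ is the union over $\mathfrak m,\lambda>0$. The homogeneous site strain potential $V^{\rm h}$ is a function on $\{Dw(\ell):x+w\in\mathscr A(\Lambda^{\rm h}),\ell\in\Lambda^{\rm h}\}\subset(\mathbb R^d)^{\Lambda^{\rm h}_*}$, with partial derivatives $V^{\rm h}_{,\boldsymbol\rho}(\boldsymbol g):=\partial^jV^{\rm h}(\boldsymbol g)/\partial\boldsymbol g_{\rho_1}\cdots\partial\boldsymbol g_{\rho_j}$. (S.R): $V^{\rm h}$ has partial derivatives up to order $\mathfrak n\ge3$. (S.L): with $\mathcal P(j)$ the set of partitions $\{A_1,\dots,A_k\}$ of $\{1,\dots,j\}$ into nonempty sets and $i'$ the smallest element of $A_i$, there exist $\mathfrak w_i\in\mathscr L_i$ and constants $C_j(\mathfrak m,\lambda)$ with $|V^{\rm h}_{,\boldsymbol\rho}(Dw(\ell))|\le C_j\sum_{\mathcal P(j)}\prod_i\big(\mathfrak w_{|A_i|}(|\rho_{i'}|)\prod_{m\in A_i}\delta_{\rho_{i'}\rho_m}\big)$ for all $w$ with $x+w\in\mathscr A_{\mathfrak m,\lambda}(\Lambda^{\rm h})$, $\ell$, $\boldsymbol\rho\in(\Lambda^{\rm h}_* )^j$, $j\le\mathfrak n$. (S.PS): $V^{\rm h}((-g_{-\rho})_{\rho\in\Lambda^{\rm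 h}_*})=V^{\rm h}(\boldsymbol g)$ for all $\boldsymbol g\in(\mathbb R^d)^{\Lambda^{\rm h}_*}$. *)

(* Defs.v *)
From Stdlib Require Import Reals Lra ZArith List.
Import ListNotations.
Open Scope R_scope.

Fixpoint rsum (n : nat) (f : nat -> R) : R :=
  match n with O => 0 | S m => rsum m f + f m end.

(* Vectors of R^d: functions nat -> R, only coordinates i < d are relevant. *)
Definition vnorm (d : nat) (v : nat -> R) : R := sqrt (rsum d (fun i => v i ^ 2)).

(* Points of Z^d: lists of integers of length d. *)
Definition site (d : nat) (k : list Z) : Prop := length k = d.
Definition zero_site (d : nat) : list Z := repeat 0%Z d.
Definition nzsite (d : nat) (k : list Z) : Prop := site d k /\ k <> zero_site d.

Fixpoint zadd (k l : list Z) : list Z :=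
  match k, l with
  | a :: k', b :: l' => (a + b)%Z :: zadd k' l'
  | _, _ => nil
  end.
Definition zneg (k : list Z) : list Z := map Z.opp k.

Definition pos (d : nat) (A : nat -> nat -> R) (k : list Z) : nat -> R :=
  fun i => rsum d (fun j => A i j * IZR (nth j k 0%Z)).

Definition nonsingular (d : nat) (A : nat -> nat -> R) : Prop :=
  forall v : nat -> R,
    (forall i, (i < d)%nat -> rsum d (fun j => A i j * v j) = 0) ->
    forall j, (j < d)%nat -> v j = 0.

(* Strain variables g = (g_rho)_{rho in Lambda_*}, rho = A k encoded by k. *)
Definition G := list Z -> nat -> R.

(* V is a function of (R^d)^{Lambda_*}: it ignores junk indices. *)
Definition respects (d : nat) (V : G -> R) : Prop :=
  forall g g' : G,
    (forall k i, nzsite d k -> (i < d)%nat -> g k i = g' k i) -> V g = V g'.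

Definition upd (g : G) (k : list Z) (i : nat) (t : R) : G :=
  fun k' j => if list_eq_dec Z.eq_dec k' k then
                if Nat.eq_dec j i then g k' j + t else g k' j
              else g k' j.

Definition valid (d : nat) (p : list Z * nat) : Prop := nzsite d (fst p) /\ (snd p < d)%nat.

(* (S.R): DV js are the partial derivatives: DV ((k,i)::js) = d/dg_{k,i} DV js,
   up to order n. *)
Definition SR (d n : nat) (V : G -> R) (DV : list (list Z * nat) -> G -> R) : Prop :=
  DV nil = V /\
  forall js, (length js < n)%nat -> Forall (valid d) js ->
  forall k i, valid d (k, i) -> forall g : G,
    derivable_pt_lim (fun t => DV js (upd g k i t)) 0 (DV ((k, i) :: js) g).

Definition in_L (d k : nat) (w : R -> R) : Prop :=
  (forall r s, 0 <= r -> r <= s -> w s <= w r) /\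
  (forall r, 0 <= r -> 0 < w r) /\
  (exists B, forall r, 0 <= r -> w r <= B) /\
  (exists M, forall Rr (pr : Riemann_integrable (fun r => r ^ (k + d - 1) * w r) 0 Rr),
      0 <= Rr -> RiemannInt pr <= M).

Definition inA (d : nat) (A : nat -> nat -> R) (m lam : R) (y : list Z -> nat -> R) : Prop :=
  (forall z : nat -> R, exists l, site d l /\ vnorm d (fun i => y l i - z i) < lam) /\
  (forall l l', site d l -> site d l' ->
     vnorm d (fun i => y l i - y l' i) >= m * vnorm d (fun i => pos d A l i - pos d A l' i)).

Definition Dw (w : list Z -> nat -> R) (l : list Z) : G :=
  fun rho i => w (zadd l rho) i - w l i.

(* set partitions of a list; blocks are lists whose head is the smallest element *)
Fixpoint add_to_blocks (x : nat) (p : list (list nat)) : list (list (list nat)) :=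
  match p with
  | nil => nil
  | B :: p' => ((x :: B) :: p') :: map (cons B) (add_to_blocks x p')
  end.
Definition extend (x : nat) (p : list (list nat)) : list (list (list nat)) :=
  ([x] :: p) :: add_to_blocks x p.
Fixpoint partitions (l : list nat) : list (list (list nat)) :=
  match l with
  | nil => [nil]
  | x :: l' => flat_map (extend x) (partitions l')
  end.

Definition delta (k l : list Z) : R := if list_eq_dec Z.eq_dec k l then 1 else 0.
Definition rprod (l : list R) : R := fold_right Rmult 1 l.
Definition rsuml (l : list R) : R := fold_right Rplus 0 l.

Definition block_term (d : nat) (A : nat -> nat -> R) (w : nat -> R -> R)
    (rhos : list (list Z)) (B : list nat) : R :=
  let b := hd O B in
  w (length B) (vnorm d (pos d A (nth b rhos nil))) *
  rprod (map (fun m => delta (nth b rhos nil) (nth m rhos nil)) B).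

Definition SL_bound (d : nat) (A : nat -> nat -> R) (w : nat -> R -> R)
    (rhos : list (list Z)) : R :=
  rsuml (map (fun P => rprod (map (block_term d A w rhos) P))
             (partitions (seq 0 (length rhos)))).

(* (S.L), componentwise (equivalent up to constants to a tensor-norm bound) *)
Definition SL (d : nat) (A : nat -> nat -> R) (n : nat) (DV : list (list Z * nat) -> G -> R) : Prop :=
  exists w : nat -> R -> R,
    (forall k, (1 <= k <= n)%nat -> in_L d k (w k)) /\
    forall m lam, 0 < m -> 0 < lam ->
    forall j, (1 <= j <= n)%nat ->
    exists C, forall (wd : list Z -> nat -> R) (l : list Z) (rhos : list (list Z)) (is : list nat),
      inA d A m lam (fun l' i => pos d A l' i + wd l' i) -> site d l ->
      length rhos = j -> Forall (nzsite d) rhos ->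
      length is = j -> Forall (fun i => (i < d)%nat) is ->
      Rabs (DV (combine rhos is) (Dw wd l)) <= C * SL_bound d A w rhos.

Definition SPS (V : G -> R) : Prop :=
  forall g : G, V (fun rho i => - g (zneg rho) i) = V g.

Definition const_outside_ball (d : nat) (A : nat -> nat -> R) (u : list Z -> nat -> R) : Prop :=
  exists (Rr : R) (c : nat -> R), forall l, site d l -> vnorm d (pos d A l) >= Rr ->
    forall i, (i < d)%nat -> u l i = c i.

(* unconditional summation over a countable index set given by a predicate *)
Definition summable_on {T : Type} (P : T -> Prop) (f : T -> R) : Prop :=
  exists M, forall l, NoDup l -> Forall P l -> rsuml (map (fun x => Rabs (f x)) l) <= M.
Definition has_sum {T : Type} (P : T -> Prop) (f : T -> R) (S : R) : Prop :=
  forall eps, 0 < eps -> exists l0, NoDup l0 /\ Forall P l0 /\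
    forall l, NoDup l -> Forall P l -> incl l0 l -> Rabs (rsuml (map f l) - S) < eps.

Definition fterm (d : nat) (DV : list (list Z * nat) -> G -> R) (u : list Z -> nat -> R)
    (l rho : list Z) : R :=
  rsum d (fun i => DV [(rho, i)] (fun _ _ => 0) * (u (zadd l rho) i - u l i)).

(* Main.v *)
Require Import Defs.
From Stdlib Require Import Reals ZArith List.
From Stdlib Require Import Lra Lia Permutation Classical FunctionalExtensionality.
From Stdlib Require Import RList.
Import ListNotations.
Import Defs.
Open Scope R_scope.

Lemma rsum_ext n f g : (forall i, (i < n)%nat -> f i = g i) -> rsum n f = rsum n g.
Proof. induction n; simpl; intros H; auto. rewrite IHn by (intros; apply H; lia). rewrite H by lia. auto. Qed.

Lemma rsum_le n f g : (forall i, (i < n)%nat -> f i <= g i) -> rsum n f <= rsum n g.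
Proof. induction n; simpl; intros H; [lra|]. assert (f n <= g n) by (apply H; lia).
 assert (rsum n f <= rsum n g) by (apply IHn; intros; apply H; lia). lra. Qed.

Lemma rsum_nonneg n f : (forall i, (i < n)%nat -> 0 <= f i) -> 0 <= rsum n f.
Proof. intros H. replace 0 with (rsum n (fun _ => 0)). apply rsum_le; auto.
 induction n; simpl; auto. rewrite IHn; [lra|intros; apply H; lia]. Qed.

Lemma rsum_zero n : rsum n (fun _ => 0) = 0.
Proof. induction n; simpl; auto. rewrite IHn; lra. Qed.

Lemma rsum_plus n f g : rsum n (fun i => f i + g i) = rsum n f + rsum n g.
Proof. induction n; simpl; [lra|]. rewrite IHn; lra. Qed.

Lemma rsum_minus n f g : rsum n (fun i => f i - g i) = rsum n f - rsum n g.
Proof. induction n; simpl; [lra|]. rewrite IHn; lra. Qed.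

Lemma rsum_scal n c f : rsum n (fun i => c * f i) = c * rsum n f.
Proof. induction n; simpl; [lra|]. rewrite IHn; lra. Qed.

Lemma rsum_abs n f : Rabs (rsum n f) <= rsum n (fun i => Rabs (f i)).
Proof. induction n; simpl. rewrite Rabs_R0; lra.
 eapply Rle_trans. apply Rabs_triang. lra. Qed.

Lemma rsum_swap n m (f : nat -> nat -> R) :
  rsum n (fun i => rsum m (fun j => f i j)) = rsum m (fun j => rsum n (fun i => f i j)).
Proof. induction n; simpl. rewrite rsum_zero; auto.
 rewrite IHn. rewrite <- rsum_plus. auto. Qed.

Lemma rsum_delta n f k : (k < n)%nat ->
  rsum n (fun j => f j * (if Nat.eq_dec j k then 1 else 0)) = f k.
Proof. induction n; intros Hk; [lia|]. simpl.
 destruct (Nat.eq_dec n k).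
 - subst. rewrite rsum_ext with (g := fun _ => 0). rewrite rsum_zero. lra.
   intros i Hi. destruct (Nat.eq_dec i k); [lia|lra].
 - rewrite IHn by lia. lra. Qed.

Lemma rsum_single_le n f k : (k < n)%nat -> (forall i, (i < n)%nat -> 0 <= f i) -> f k <= rsum n f.
Proof. induction n; intros Hk H; [lia|]. simpl.
 destruct (Nat.eq_dec k n). subst. assert (0 <= rsum n f) by (apply rsum_nonneg; intros; apply H; lia). lra.
 assert (f k <= rsum n f) by (apply IHn; [lia| intros; apply H; lia]). assert (0<= f n) by (apply H; lia). lra. Qed.

Lemma rsuml_app l1 l2 : rsuml (l1 ++ l2) = rsuml l1 + rsuml l2.
Proof. induction l1; simpl; [lra|]. rewrite IHl1; lra. Qed.

Lemma rsuml_map_ext {T} (f g : T -> R) l : (forall x, In x l -> f x = g x) -> rsuml (map f l) = rsuml (map g l).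
Proof. induction l; simpl; intros H; auto. rewrite H by auto. rewrite IHl; auto. Qed.

Lemma rsuml_map_le {T} (f g : T -> R) l : (forall x, In x l -> f x <= g x) -> rsuml (map f l) <= rsuml (map g l).
Proof. induction l; simpl; intros H; [lra|]. assert (f a <= g a) by auto.
 assert (rsuml (map f l) <= rsuml (map g l)) by auto. lra. Qed.

Lemma rsuml_map_nonneg {T} (f : T -> R) l : (forall x, In x l -> 0 <= f x) -> 0 <= rsuml (map f l).
Proof. induction l; simpl; intros H; [lra|]. assert (0 <= f a) by auto.
 assert (0<=rsuml (map f l)) by auto. lra. Qed.

Lemma rsuml_map_zero {T} (f : T -> R) l : (forall x, In x l -> f x = 0) -> rsuml (map f l) = 0.
Proof. induction l; simpl; intros H; [lra|]. rewrite H, IHl; auto; lra. Qed.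

Lemma rsuml_perm {T} (f : T -> R) l1 l2 : Permutation l1 l2 -> rsuml (map f l1) = rsuml (map f l2).
Proof. induction 1; simpl; lra. Qed.

Lemma rsuml_plus {T} (f g : T -> R) l : rsuml (map (fun x => f x + g x) l) = rsuml (map f l) + rsuml (map g l).
Proof. induction l; simpl; [lra|]. rewrite IHl; lra. Qed.

Lemma rsuml_minus {T} (f g : T -> R) l : rsuml (map (fun x => f x - g x) l) = rsuml (map f l) - rsuml (map g l).
Proof. induction l; simpl; [lra|]. rewrite IHl; lra. Qed.

Lemma rsuml_scal {T} c (f : T -> R) l : rsuml (map (fun x => c * f x) l) = c * rsuml (map f l).
Proof. induction l; simpl; [lra|]. rewrite IHl; lra. Qed.

Lemma rsuml_opp {T} (f : T -> R) l : rsuml (map (fun x => - f x) l) = - rsuml (map f l).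
Proof. induction l; simpl; [lra|]. rewrite IHl; lra. Qed.

Lemma rsuml_abs {T} (f : T -> R) l : Rabs (rsuml (map f l)) <= rsuml (map (fun x => Rabs (f x)) l).
Proof. induction l; simpl. rewrite Rabs_R0; lra.
 eapply Rle_trans. apply Rabs_triang. lra. Qed.

Lemma rsuml_rsum {T} n (f : T -> nat -> R) l :
  rsuml (map (fun x => rsum n (f x)) l) = rsum n (fun i => rsuml (map (fun x => f x i) l)).
Proof. induction l; simpl. rewrite rsum_zero; auto. rewrite IHl, <- rsum_plus. auto. Qed.

Lemma rsuml_swap {T U} (f : T -> U -> R) l m :
  rsuml (map (fun x => rsuml (map (fun y => f x y) m)) l) = rsuml (map (fun y => rsuml (map (fun x => f x y) l)) m).
Proof. induction l; simpl. rewrite rsuml_map_zero; auto.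
 rewrite IHl, <- rsuml_plus. auto. Qed.

Lemma rsuml_filter {T} (p : T -> bool) (f : T -> R) l :
  rsuml (map f (filter p l)) = rsuml (map (fun x => if p x then f x else 0) l).
Proof. induction l; simpl; auto. destruct (p a); simpl; rewrite IHl; lra. Qed.

Lemma rsuml_map_map {T U} (g : T -> U) (f : U -> R) l : rsuml (map f (map g l)) = rsuml (map (fun x => f (g x)) l).
Proof. rewrite map_map; auto. Qed.

Lemma rsuml_single_le {T} (f : T -> R) l x : In x l -> (forall y, In y l -> 0 <= f y) -> f x <= rsuml (map f l).
Proof. induction l; simpl; intros Hx H; [tauto|]. destruct Hx as [<-|Hx].
 assert (0 <= rsuml (map f l)) by (apply rsuml_map_nonneg; auto). lra.
 assert (f x <= rsuml (map f l)) by auto. assert (0 <= f a) by auto. lra. Qed.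

Lemma rsuml_sub {T} (dec : forall x y : T, {x = y} + {x <> y}) (g : T -> R) P Q :
  NoDup P -> NoDup Q -> incl Q P -> (forall x, In x P -> ~ In x Q -> g x = 0) ->
  rsuml (map g P) = rsuml (map g Q).
Proof. intros HP HQ HI Hz.
 assert (Hperm : Permutation P (filter (fun x => if in_dec dec x Q then true else false) P ++
                                filter (fun x => if in_dec dec x Q then false else true) P)).
 { clear. induction P; simpl; auto. destruct (in_dec dec a Q); simpl.
   constructor; auto. apply Permutation_cons_app; auto. }
 rewrite (rsuml_perm _ _ _ Hperm), map_app, rsuml_app.
 rewrite (rsuml_map_zero g (filter (fun x => if in_dec dec x Q then false else true) P)).
 2:{ intros x Hx. apply filter_In in Hx. destruct Hx as [Hx1 Hx2]. destruct (in_dec dec x Q); try discriminate. auto. }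
 rewrite Rplus_0_r. apply rsuml_perm. apply NoDup_Permutation.
 apply NoDup_filter; auto. auto.
 intros x; split; intros Hx. apply filter_In in Hx. destruct Hx. destruct (in_dec dec x Q); auto; discriminate.
 apply filter_In. split; auto. destruct (in_dec dec x Q); auto.
Qed.

Lemma rsuml_group {T U} (decU : forall x y : U, {x = y} + {x <> y}) (key : T -> U) (F : T -> R) L M :
  (forall x, In x L -> 0 <= F x) -> (forall x, In x L -> ~ In (key x) M -> F x = 0) ->
  rsuml (map F L) <= rsuml (map (fun m => rsuml (map F (filter (fun x => if decU (key x) m then true else false) L))) M).
Proof. induction L as [|a L IH]; intros H0 Hz; simpl.
 - rewrite rsuml_map_zero; auto; lra.
 - rewrite (rsuml_map_ext _ (fun m => (if decU (key a) m then F a else 0) +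
        rsuml (map F (filter (fun x => if decU (key x) m then true else false) L)))).
   2:{ intros m _. destruct (decU (key a) m); simpl; lra. }
   rewrite rsuml_plus.
   assert (rsuml (map F L) <= rsuml (map (fun m => rsuml (map F (filter (fun x => if decU (key x) m then true else false) L))) M)).
   { apply IH; intros; [apply H0|apply Hz]; simpl; auto. }
   assert (F a <= rsuml (map (fun m => if decU (key a) m then F a else 0) M)).
   { destruct (in_dec decU (key a) M).
     - assert (HH := rsuml_single_le (fun m => if decU (key a) m then F a else 0) M (key a) i).
       simpl in HH. destruct (decU (key a) (key a)); [|congruence]. apply HH.
       intros y _. destruct (decU (key a) y); [apply H0; simpl; auto|lra].
     - rewrite Hz; simpl; auto. apply rsuml_map_nonneg. intros y _. destruct (decU (key a) y); lra. }
   lra.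
Qed.

Lemma NoDup_map_on {T U} (f : T -> U) l : NoDup l -> (forall x y, In x l -> In y l -> f x = f y -> x = y) -> NoDup (map f l).
Proof. induction l; simpl; intros H Hi; constructor.
 - inversion H; subst. intros Hin. apply in_map_iff in Hin. destruct Hin as [y [Hy Hy']].
   assert (y = a) by (apply Hi; auto). subst. tauto.
 - inversion H; subst. apply IHl; auto.
Qed.

Definition zdec := list_eq_dec Z.eq_dec.

Lemma zadd_length k l : length (zadd k l) = Nat.min (length k) (length l).
Proof. revert l; induction k; destruct l; simpl; auto. Qed.

Lemma zadd_comm k l : zadd k l = zadd l k.
Proof. revert l; induction k; destruct l; simpl; auto. rewrite IHk, Z.add_comm; auto. Qed.

Lemma zadd_assoc a b c : zadd (zadd a b) c = zadd a (zadd b c).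
Proof. revert b c; induction a; destruct b; destruct c; simpl; auto. rewrite IHa, Z.add_assoc; auto. Qed.

Lemma zadd_zero k : zadd k (zero_site (length k)) = k.
Proof. unfold zero_site; induction k; simpl; auto. rewrite IHk, Z.add_0_r; auto. Qed.

Lemma zneg_length k : length (zneg k) = length k.
Proof. apply length_map. Qed.

Lemma zadd_neg k : zadd k (zneg k) = zero_site (length k).
Proof. unfold zero_site in *; induction k; simpl; auto. rewrite IHk, Z.add_opp_diag_r; auto. Qed.

Lemma zneg_zneg k : zneg (zneg k) = k.
Proof. induction k; simpl; auto. unfold zneg in *. simpl. rewrite IHk, Z.opp_involutive; auto. Qed.

Lemma zneg_zadd a b : zneg (zadd a b) = zadd (zneg a) (zneg b).
Proof. revert b; induction a; destruct b; simpl; auto. unfold zneg in *. simpl. rewrite IHa, Z.opp_add_distr. auto. Qed.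

Lemma zneg_zero d : zneg (zero_site d) = zero_site d.
Proof. unfold zero_site in *; induction d; simpl; auto. unfold zneg in *; simpl. rewrite IHd. auto. Qed.

Lemma zero_site_length d : length (zero_site d) = d.
Proof. apply repeat_length. Qed.

Lemma nth_zadd k l j : length k = length l -> nth j (zadd k l) 0%Z = (nth j k 0 + nth j l 0)%Z.
Proof. revert l j; induction k as [|a k IH]; intros [|b l] j H; simpl in H; try discriminate.
- destruct j; reflexivity.
- destruct j; simpl. reflexivity. apply IH. lia. Qed.

Definition zsub m l := zadd m (zneg l).

Lemma zadd_zsub l m : length l = length m -> zadd l (zsub m l) = m.
Proof. intros H. unfold zsub. rewrite zadd_comm, zadd_assoc, (zadd_comm (zneg l)), zadd_neg, H, zadd_zero. auto. Qed.

Lemma zsub_zadd l r : length l = length r -> zsub (zadd l r) l = r.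
Proof. intros H. unfold zsub. rewrite (zadd_comm l), zadd_assoc, zadd_neg, H, zadd_zero. auto. Qed.

Lemma zsub_zsub m r : length m = length r -> zsub m (zsub m r) = r.
Proof. intros H. unfold zsub. rewrite zneg_zadd, zneg_zneg, <- zadd_assoc, zadd_neg, zadd_comm, H, zadd_zero. auto. Qed.

Lemma zsub_length m l : length m = length l -> length (zsub m l) = length m.
Proof. intros. unfold zsub. rewrite zadd_length, zneg_length. lia. Qed.

Lemma zsub_self m : zsub m m = zero_site (length m).
Proof. apply zadd_neg. Qed.

Lemma zsub_inj m a b : length m = length a -> length m = length b -> zsub m a = zsub m b -> a = b.
Proof. intros Ha Hb H. rewrite <- (zsub_zsub m a), <- (zsub_zsub m b), H; auto. Qed.

Lemma zsub_nz m l : length m = length l -> l <> m -> zsub m l <> zero_site (length m).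
Proof. intros H Hne E. apply Hne. rewrite <- (zadd_zsub l m) by auto. rewrite E, H, zadd_zero. auto. Qed.

Lemma site_zadd d a b : site d a -> site d b -> site d (zadd a b).
Proof. unfold site; intros. rewrite zadd_length; lia. Qed.

Lemma site_zsub d a b : site d a -> site d b -> site d (zsub a b).
Proof. unfold site; intros. rewrite zsub_length; lia. Qed.

Definition zrange (k : nat) : list Z := map (fun i => (Z.of_nat i - Z.of_nat k)%Z) (seq 0 (2*k+1)).

Lemma zrange_In k z : (Z.abs z <= Z.of_nat k)%Z -> In z (zrange k).
Proof. intros H. unfold zrange. apply in_map_iff. exists (Z.to_nat (z + Z.of_nat k)).
 split. rewrite Z2Nat.id; lia. apply in_seq. lia. Qed.

Fixpoint cube (d k : nat) : list (list Z) :=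
  match d with O => [nil] | S d' => flat_map (fun z => map (cons z) (cube d' k)) (zrange k) end.

Lemma flat_cons_length (l : list Z) (L : list (list Z)) : length (flat_map (fun z => map (cons z) L) l) = (length l * length L)%nat.
Proof. induction l; simpl; auto. rewrite length_app, length_map, IHl. auto. Qed.

Lemma cube_length d k : length (cube d k) = Nat.pow (2*k+1) d.
Proof. induction d; simpl; auto. rewrite flat_cons_length, IHd. unfold zrange. rewrite length_map, length_seq. auto. Qed.

Definition ninf (r : list Z) : nat := fold_right (fun z m => Nat.max (Z.abs_nat z) m) O r.

Lemma cube_In d k r : site d r -> (ninf r <= k)%nat -> In r (cube d k).
Proof. unfold ninf in *; revert r; induction d; intros r Hs Hn; destruct r; simpl in *; try discriminate; auto.
 unfold site in Hs; simpl in Hs. apply in_flat_map. exists z. split.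
 apply zrange_In. lia. apply in_map. apply IHd. unfold site; lia. lia. Qed.

Lemma ninf_zero d r : site d r -> ninf r = O -> r = zero_site d.
Proof. unfold ninf in *; revert r; induction d; intros r Hs Hn; destruct r; simpl in *; try discriminate; auto.
 unfold site in Hs; simpl in Hs.
 assert (Hz0 : Z.of_nat (Z.abs_nat z) = 0%Z) by lia. rewrite Zabs2Nat.id_abs in Hz0.
 replace z with 0%Z by lia. change (zero_site (S d)) with (0%Z :: zero_site d). f_equal. apply IHd. unfold site; lia. lia. Qed.

Lemma ninf_cons a r : ninf (a::r) = Nat.max (Z.abs_nat a) (ninf r).
Proof. reflexivity. Qed.

Lemma ninf_attained r : r <> nil -> exists j, (j < length r)%nat /\ Z.abs_nat (nth j r 0%Z) = ninf r.
Proof. induction r; intros H; [congruence|]. rewrite ninf_cons. destruct r as [|b r].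
 - exists O. simpl. split; [lia|]. change (ninf []) with O. lia.
 - destruct IHr as [j [Hj Hj']]. discriminate.
   destruct (Nat.le_ge_cases (Z.abs_nat a) (ninf (b :: r))).
   + exists (S j). split. simpl in *; lia. change (nth (S j) (a :: b :: r) 0%Z) with (nth j (b :: r) 0%Z). rewrite Hj'. lia.
   + exists O. split. simpl; lia. simpl nth. lia. Qed.

Lemma INR_abs_nat z : INR (Z.abs_nat z) = Rabs (IZR z).
Proof. rewrite INR_IZR_INZ, Zabs2Nat.id_abs, abs_IZR. auto. Qed.

Lemma ninf_bound r j : (Rabs (IZR (nth j r 0%Z)) <= INR (ninf r)).
Proof. rewrite <- INR_abs_nat. apply le_INR. unfold ninf; revert j; induction r; intros j; simpl.
 destruct j; simpl; lia. destruct j; simpl. lia. specialize (IHr j). lia. Qed.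

Lemma nzsite_ninf d r : nzsite d r -> (1 <= ninf r)%nat.
Proof. intros [Hs Hn]. destruct (ninf r) eqn:E; [|lia]. exfalso. apply Hn. apply ninf_zero; auto. Qed.

Lemma nzsite_zneg d r : nzsite d r -> nzsite d (zneg r).
Proof. intros [Hs Hn]. split. unfold site in *. rewrite zneg_length; auto.
 intros E. apply Hn. rewrite <- (zneg_zneg r), E, zneg_zero. auto. Qed.

Lemma nzsite_dec d r : {nzsite d r} + {~ nzsite d r}.
Proof. unfold nzsite, site. destruct (Nat.eq_dec (length r) d); [|right; tauto].
 destruct (zdec r (zero_site d)); [right|left]; tauto. Qed.

Lemma cube_site d k r : In r (cube d k) -> site d r.
Proof. unfold site. revert r; induction d; simpl; intros r H.
 destruct H as [<-|[]]; auto.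
 apply in_flat_map in H. destruct H as [z [_ H]]. apply in_map_iff in H. destruct H as [r' [<- H]].
 simpl. f_equal. auto. Qed.

Lemma vnorm_nonneg d v : 0 <= vnorm d v.
Proof. apply sqrt_pos. Qed.

Lemma vnorm_ext d v w : (forall i, (i < d)%nat -> v i = w i) -> vnorm d v = vnorm d w.
Proof. intros H. unfold vnorm. f_equal. apply rsum_ext. intros i Hi. rewrite H; auto. Qed.

Lemma vnorm_ge_abs d v i : (i < d)%nat -> Rabs (v i) <= vnorm d v.
Proof. intros Hi. unfold vnorm. rewrite <- sqrt_Rsqr_abs. apply sqrt_le_1_alt.
 unfold Rsqr. replace (v i * v i) with (v i ^ 2) by ring.
 apply (rsum_single_le d (fun j => v j ^ 2)); auto. intros. apply pow2_ge_0. Qed.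

Lemma rsum_sq_le d v : rsum d (fun i => v i ^ 2) <= (rsum d (fun i => Rabs (v i)))^2.
Proof. induction d; cbn [rsum]. simpl; lra.
 assert (0 <= rsum d (fun i => Rabs (v i))) by (apply rsum_nonneg; intros; apply Rabs_pos).
 assert (v d ^2 = Rabs (v d) ^ 2) by (rewrite <- (pow2_abs (v d)); auto).
 assert (0 <= Rabs (v d)) by apply Rabs_pos.
 set (S0 := rsum d (fun i => Rabs (v i))) in *. set (a := Rabs (v d)) in *.
 replace ((S0 + a)^2) with (S0^2 + a^2 + 2 * (S0 * a)) by ring.
 assert (0 <= S0 * a) by (apply Rmult_le_pos; auto). lra. Qed.

Lemma vnorm_le_sum d v : vnorm d v <= rsum d (fun i => Rabs (v i)).
Proof. unfold vnorm. rewrite <- (sqrt_pow2 (rsum d (fun i => Rabs (v i)))).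
 apply sqrt_le_1_alt. apply rsum_sq_le. apply rsum_nonneg; intros; apply Rabs_pos. Qed.

Definition inv_mat d (A B : nat -> nat -> R) :=
  (forall i k, (i < d)%nat -> (k < d)%nat -> rsum d (fun j => A i j * B j k) = if Nat.eq_dec i k then 1 else 0) /\
  (forall i k, (i < d)%nat -> (k < d)%nat -> rsum d (fun j => B i j * A j k) = if Nat.eq_dec i k then 1 else 0).

Lemma ker2 A : nonsingular 2 A -> forall v0 v1,
  A 0%nat 0%nat * v0 + A 0%nat 1%nat * v1 = 0 -> A 1%nat 0%nat * v0 + A 1%nat 1%nat * v1 = 0 -> v0 = 0 /\ v1 = 0.
Proof. intros H v0 v1 E0 E1.
 assert (HH := H (fun j => match j with O => v0 | _ => v1 end)).
 split; [apply (HH ltac:(intros i Hi; destruct i as [|[|i]]; simpl; lra || lia) 0%nat) |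
         apply (HH ltac:(intros i Hi; destruct i as [|[|i]]; simpl; lra || lia) 1%nat)]; lia. Qed.

Lemma ker3 A : nonsingular 3 A -> forall v0 v1 v2,
  A 0%nat 0%nat * v0 + A 0%nat 1%nat * v1 + A 0%nat 2%nat * v2 = 0 -> A 1%nat 0%nat * v0 + A 1%nat 1%nat * v1 + A 1%nat 2%nat * v2 = 0 ->
  A 2%nat 0%nat * v0 + A 2%nat 1%nat * v1 + A 2%nat 2%nat * v2 = 0 -> v0 = 0 /\ v1 = 0 /\ v2 = 0.
Proof. intros H v0 v1 v2 E0 E1 E2.
 assert (HH := H (fun j => match j with O => v0 | 1%nat => v1 | _ => v2 end)
   ltac:(intros i Hi; destruct i as [|[|[|i]]]; simpl; lra || lia)).
 split; [|split]; [apply (HH 0%nat)|apply (HH 1%nat)|apply (HH 2%nat)]; lia. Qed.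

Lemma inv2 A : nonsingular 2 A -> exists B, inv_mat 2 A B.
Proof. intros H.
 set (det := A 0%nat 0%nat * A 1%nat 1%nat - A 0%nat 1%nat * A 1%nat 0%nat).
 assert (Hd : det <> 0).
 { intros E. unfold det in E.
   destruct (ker2 A H (A 0%nat 1%nat) (- A 0%nat 0%nat)) as [E1 E2]; [lra|lra|].
   destruct (ker2 A H (A 1%nat 1%nat) (- A 1%nat 0%nat)) as [E3 E4]; [lra|lra|].
   destruct (ker2 A H 1 0) as [E5 E6]; lra. }
 exists (fun j k => match j, k with
   | O, O => A 1%nat 1%nat / det | O, 1 => - A 0%nat 1%nat / det | 1, O => - A 1%nat 0%nat / det | 1, 1 => A 0%nat 0%nat / det
   | _, _ => 0 end).
 split; intros i k Hi Hk; destruct i as [|[|i]]; try lia; destruct k as [|[|k]]; try lia; simpl;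
  unfold det in *; field; auto.
Qed.

Definition m3 (k : nat) : nat := Nat.modulo k 3.
Definition cof3 (A : nat -> nat -> R) (i j : nat) : R :=
  A (m3 (i+1)) (m3 (j+1)) * A (m3 (i+2)) (m3 (j+2)) - A (m3 (i+1)) (m3 (j+2)) * A (m3 (i+2)) (m3 (j+1)).

Lemma inv3 A : nonsingular 3 A -> exists B, inv_mat 3 A B.
Proof. intros H.
 set (det := A 0%nat 0%nat * cof3 A 0%nat 0%nat + A 0%nat 1%nat * cof3 A 0%nat 1%nat + A 0%nat 2%nat * cof3 A 0%nat 2%nat).
 assert (Hd : det <> 0).
 { intros E. unfold det, cof3, m3 in E. simpl in E.
   assert (C : forall k, (k < 3)%nat -> cof3 A k 0%nat = 0 /\ cof3 A k 1%nat = 0 /\ cof3 A k 2%nat = 0).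
   { intros k Hk. apply (ker3 A); auto; destruct k as [|[|[|k]]]; try lia; unfold cof3, m3; simpl; lra. }
   destruct (C 0%nat) as [C00 [C01 C02]]; [lia|].
   destruct (C 1%nat) as [C10 [C11 C12]]; [lia|].
   destruct (C 2%nat) as [C20 [C21 C22]]; [lia|].
   unfold cof3, m3 in *; simpl in *.
   assert (R0 : forall a, (a < 3)%nat -> A a%nat 0%nat = 0 /\ A a%nat 1%nat = 0 /\ A a%nat 2%nat = 0).
   { intros a Ha.
     destruct (ker3 A H 0 (A a%nat 2%nat) (- A a%nat 1%nat)) as [_ [Z1 Z2]];
       [destruct a as [|[|[|a]]]; try lia; simpl; lra ..|].
     destruct (ker3 A H (- A a%nat 2%nat) 0 (A a%nat 0%nat)) as [_ [_ Z3]];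
       [destruct a as [|[|[|a]]]; try lia; simpl; lra ..|].
     lra. }
   destruct (R0 0%nat) as [a00 [a01 a02]]; [lia|].
   destruct (R0 1%nat) as [a10 [a11 a12]]; [lia|].
   destruct (R0 2%nat) as [a20 [a21 a22]]; [lia|].
   destruct (ker3 A H 1 0 0) as [Z _]; [rewrite a00, a01, a02; lra|rewrite a10,a11,a12; lra|rewrite a20,a21,a22;lra|lra]. }
 exists (fun j k => cof3 A k j / det).
 split; intros i k Hi Hk; destruct i as [|[|[|i]]]; try lia; destruct k as [|[|[|k]]]; try lia; simpl;
  unfold det, cof3, m3 in *; simpl in *; field; auto.
Qed.

Lemma inv_exists d A : (d = 2%nat \/ d = 3%nat) -> nonsingular d A -> exists B, inv_mat d A B.
Proof. intros [-> | ->]; [apply inv2|apply inv3]. Qed.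

Lemma rsum_delta' n f k : (k < n)%nat ->
  rsum n (fun j => (if Nat.eq_dec k j then 1 else 0) * f j) = f k.
Proof. intros Hk. rewrite <- (rsum_delta n f k Hk). apply rsum_ext. intros i Hi.
 destruct (Nat.eq_dec k i), (Nat.eq_dec i k); try lia; lra. Qed.

Lemma pos_inv d A B r j : inv_mat d A B -> site d r -> (j < d)%nat ->
  rsum d (fun k => B j k * pos d A r k) = IZR (nth j r 0%Z).
Proof. intros [_ HBA] Hs Hj. unfold pos.
 rewrite (rsum_ext _ _ (fun k => rsum d (fun m => B j k * A k m * IZR (nth m r 0%Z)))).
 2:{ intros k Hk. rewrite <- rsum_scal. apply rsum_ext. intros; ring. }
 rewrite rsum_swap.
 rewrite (rsum_ext _ _ (fun m => (if Nat.eq_dec j m then 1 else 0) * IZR (nth m r 0%Z))).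
 apply rsum_delta'; auto.
 intros m Hm. rewrite <- HBA by auto. rewrite Rmult_comm, <- rsum_scal.
 apply rsum_ext; intros; ring. Qed.

Lemma coercive d A B : inv_mat d A B -> exists Kb, 0 < Kb /\
  forall r, site d r -> INR (ninf r) <= Kb * vnorm d (pos d A r).
Proof. intros HI. set (s := rsum d (fun j => rsum d (fun k => Rabs (B j k)))).
 assert (Hs0 : 0 <= s) by (apply rsum_nonneg; intros; apply rsum_nonneg; intros; apply Rabs_pos).
 exists (s + 1). split. lra. intros r Hr.
 assert (Hv := vnorm_nonneg d (pos d A r)).
 destruct r as [|z r'] eqn:Er.
 - change (ninf []) with O. simpl. nra.
 - rewrite <- Er in *. destruct (ninf_attained r) as [j [Hj Hj']]. subst; discriminate.
   unfold site in Hr. rewrite Hr in Hj.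
   rewrite <- Hj', INR_abs_nat, <- (pos_inv d A B r j) by auto.
   eapply Rle_trans. apply rsum_abs.
   eapply Rle_trans with (rsum d (fun k => Rabs (B j k) * vnorm d (pos d A r))).
   { apply rsum_le. intros k Hk. rewrite Rabs_mult. apply Rmult_le_compat_l. apply Rabs_pos. apply vnorm_ge_abs; auto. }
   rewrite (rsum_ext _ _ (fun k => vnorm d (pos d A r) * Rabs (B j k))) by (intros; ring).
   rewrite rsum_scal.
   assert (rsum d (fun k => Rabs (B j k)) <= s).
   { apply (rsum_single_le d (fun j => rsum d (fun k => Rabs (B j k)))); auto. intros; apply rsum_nonneg; intros; apply Rabs_pos. }
   nra.
Qed.

Lemma nth_map_seq {T} (f : nat -> T) d j z : (j < d)%nat -> nth j (map f (seq 0 d)) z = f j.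
Proof. intros. rewrite (nth_indep _ z (f 0%nat)) by (rewrite length_map, length_seq; auto).
 rewrite map_nth, seq_nth; auto. Qed.

Lemma lat_covering d A B : inv_mat d A B -> exists lam, 0 < lam /\
  forall z : nat -> R, exists l, site d l /\ vnorm d (fun i => pos d A l i - z i) < lam.
Proof. intros [HAB HBA]. set (al := rsum d (fun i => rsum d (fun j => Rabs (A i j)))).
 assert (Ha0 : 0 <= al) by (apply rsum_nonneg; intros; apply rsum_nonneg; intros; apply Rabs_pos).
 exists (al + 1). split. lra. intros z.
 set (x := fun j => rsum d (fun k => B j k * z k)).
 exists (map (fun j => up (x j)) (seq 0 d)). split.
 { unfold site. rewrite length_map, length_seq. auto. }
 eapply Rle_lt_trans; [apply vnorm_le_sum|]. apply Rle_lt_trans with al; [|lra].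
 apply rsum_le. intros i Hi.
 assert (E : pos d A (map (fun j => up (x j)) (seq 0 d)) i - z i =
            rsum d (fun j => A i j * (IZR (up (x j)) - x j))).
 { unfold pos. rewrite (rsum_ext _ _ (fun j => A i j * IZR (up (x j)))).
   2:{ intros j Hj. rewrite nth_map_seq; auto. }
   rewrite (rsum_ext d (fun j => A i j * (IZR (up (x j)) - x j)) (fun j => A i j * IZR (up (x j)) - A i j * x j)) by (intros; ring).
   rewrite rsum_minus.
   assert (rsum d (fun j => A i j * x j) = z i).
   { unfold x. rewrite (rsum_ext _ _ (fun j => rsum d (fun k => A i j * B j k * z k))).
     2:{ intros j Hj. rewrite <- rsum_scal. apply rsum_ext; intros; ring. }
     rewrite rsum_swap.
     rewrite (rsum_ext _ _ (fun k => (if Nat.eq_dec i k then 1 else 0) * z k)).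
     apply rsum_delta'; auto.
     intros k Hk. rewrite <- HAB by auto. rewrite Rmult_comm, <- rsum_scal.
     apply rsum_ext; intros; ring. }
   lra. }
 rewrite E. eapply Rle_trans. apply rsum_abs. apply rsum_le. intros j Hj.
 rewrite Rabs_mult. destruct (archimed (x j)) as [H1 H2].
 rewrite (Rabs_right (IZR (up (x j)) - x j)) by lra.
 assert (0 <= Rabs (A i j)) by apply Rabs_pos. nra.
Qed.

Fixpoint pts (N : nat) (a del : R) : list R :=
  match N with O => [a] | S N' => a :: pts N' (a + del) del end.
Fixpoint vals (v : R -> R) (N : nat) (a del : R) : list R :=
  match N with O => [] | S N' => v a :: vals v N' (a + del) del end.
Fixpoint sf (v c : R -> R) (N : nat) (a del : R) (t : R) : R :=
  match N with O => c a | S N' => if Rlt_dec t (a + del) then v a else sf v c N' (a + del) del t end.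

Lemma pts_length N a del : length (pts N a del) = S N.
Proof. revert a; induction N; intros; simpl; auto. Qed.
Lemma vals_length v N a del : length (vals v N a del) = N.
Proof. revert a; induction N; intros; simpl; auto. Qed.

Lemma pts_nth N a del i : (i <= N)%nat -> pos_Rl (pts N a del) i = a + INR i * del.
Proof. revert a i; induction N; intros a i Hi.
 - destruct i; [|lia]. simpl. ring.
 - destruct i. simpl. ring. change (pos_Rl (pts N (a+del) del) i = a + INR (S i) * del).
   rewrite IHN by lia. rewrite S_INR. ring. Qed.

Lemma vals_nth v N a del i : (i < N)%nat -> pos_Rl (vals v N a del) i = v (a + INR i * del).
Proof. revert a i; induction N; intros a i Hi. lia.
 destruct i. simpl. f_equal; ring. change (pos_Rl (vals v N (a+del) del) i = v (a + INR (S i) * del)).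
 rewrite IHN by lia. rewrite S_INR. f_equal; ring. Qed.

Lemma sf_const v c N a del i t : 0 < del -> (i < N)%nat ->
  a + INR i * del < t < a + INR (S i) * del -> sf v c N a del t = v (a + INR i * del).
Proof. revert a i; induction N; intros a i Hdel Hi Ht. lia.
 simpl. destruct i.
 - simpl in Ht. destruct (Rlt_dec t (a + del)). f_equal; simpl; ring. lra.
 - rewrite S_INR in Ht. rewrite (S_INR (S i)) in Ht. rewrite S_INR in Ht.
   destruct (Rlt_dec t (a + del)).
   + exfalso. assert (0 <= INR i) by apply pos_INR. nra.
   + rewrite (IHN (a + del) i); auto. f_equal. rewrite S_INR; ring. lia.
     rewrite S_INR. split; lra.
Qed.

Lemma adapted_sf v c N a del b : 0 < del -> b = a + INR N * del ->
  adapted_couple (sf v c N a del) a b (pts N a del) (vals v N a del).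
Proof. intros Hdel Hb. assert (Hab : a <= b). { subst. assert (0 <= INR N) by apply pos_INR. nra. }
 unfold adapted_couple. rewrite pts_length, vals_length. simpl pred.
 repeat split.
 - unfold ordered_Rlist. intros i Hi. rewrite pts_length in Hi. simpl in Hi.
   rewrite !pts_nth by lia. rewrite S_INR. lra.
 - rewrite Rmin_left by auto. rewrite pts_nth by lia. simpl; ring.
 - rewrite Rmax_right by auto. rewrite pts_nth by lia. auto.
 - intros i Hi. unfold constant_D_eq, open_interval. intros t Ht.
   rewrite !pts_nth in Ht by lia. rewrite vals_nth by lia. apply sf_const; auto.
Qed.

Definition mkSF (v c : R -> R) (N : nat) (a del b : R) (Hdel : 0 < del) (Hb : b = a + INR N * del) : StepFun a b :=
  mkStepFun (existT _ (pts N a del) (existT _ (vals v N a del) (adapted_sf v c N a del b Hdel Hb))).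

Lemma Int_SF_tele f N a del :
  Int_SF (vals (fun x => f x - f (x + del)) N a del) (pts N a del) = del * (f a - f (a + INR N * del)).
Proof. revert a; induction N; intros a. change (INR 0) with 0. rewrite Rmult_0_l, Rplus_0_r, Rminus_diag. simpl; ring.
 simpl vals. simpl pts. destruct N.
 - replace (a + INR 1 * del) with (a + del) by (simpl; ring). simpl. ring.
 - change (pts (S N) (a + del) del) with ((a + del) :: pts N (a + del + del) del).
   change (Int_SF (f a - f (a + del) :: vals (fun x => f x - f (x + del)) (S N) (a + del) del)
             (a :: (a + del) :: pts N (a + del + del) del))
     with ((f a - f (a + del)) * ((a + del) - a) + Int_SF (vals (fun x => f x - f (x + del)) (S N) (a + del) del)
             ((a + del) :: pts N (a + del + del) del)).
   change ((a + del) :: pts N (a + del + del) del) with (pts (S N) (a + del) del).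
   rewrite IHN. rewrite (S_INR (S N)). replace (a + del + INR (S N) * del) with (a + (INR (S N) + 1) * del) by ring.
   ring.
Qed.

Lemma sf_approx f N a del t : 0 < del ->
  (forall r s, a <= r -> r <= s -> s <= a + INR N * del -> f s <= f r) ->
  a <= t <= a + INR N * del ->
  Rabs (f t - sf f f N a del t) <= sf (fun x => f x - f (x + del)) (fun _ => 0) N a del t.
Proof. revert a; induction N; intros a Hdel Hm Ht.
 - simpl in *. replace t with a by lra. rewrite Rminus_diag, Rabs_R0. lra.
 - rewrite S_INR in *. simpl. destruct (Rlt_dec t (a + del)).
   + assert (0 <= INR N) by apply pos_INR.
     assert (f t <= f a) by (apply Hm; nra). assert (f (a + del) <= f t) by (apply Hm; nra).
     rewrite Rabs_left1 by lra. lra.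
   + apply IHN; auto. intros r s Hr Hrs Hs. apply Hm; lra. lra.
Qed.

Lemma INR_to_nat_ge z : IZR z <= INR (Z.to_nat z).
Proof. destruct (Z_lt_le_dec z 0).
 - destruct z; try lia. simpl. apply IZR_le. lia.
 - rewrite INR_IZR_INZ, Z2Nat.id by lia. lra. Qed.

Lemma decr_integrable f a b : a <= b -> (forall r s, a <= r -> r <= s -> s <= b -> f s <= f r) ->
  Riemann_integrable f a b.
Proof. intros Hab Hm. destruct (Req_EM_T a b) as [<-|Hne]. apply RiemannInt_P7.
 assert (Hlt : a < b) by lra.
 intros eps.
 set (K := (b - a) * (f a - f b) / eps).
 set (N := S (Z.to_nat (up K))).
 assert (HN : K < INR N).
 { unfold N. rewrite S_INR. destruct (archimed K). assert (IZR (up K) <= INR (Z.to_nat (up K))) by apply INR_to_nat_ge. lra. }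
 assert (HN0 : 0 < INR N) by (unfold N; rewrite S_INR; assert (0 <= INR (Z.to_nat (up K))) by apply pos_INR; lra).
 set (del := (b - a) / INR N).
 assert (Hdel : 0 < del) by (unfold del; apply Rdiv_lt_0_compat; lra).
 assert (Hb : b = a + INR N * del) by (unfold del; field; lra).
 exists (mkSF f f N a del b Hdel Hb).
 exists (mkSF (fun x => f x - f (x + del)) (fun _ => 0) N a del b Hdel Hb).
 split.
 - intros t Ht. rewrite Rmin_left, Rmax_right in Ht by lra. unfold mkSF; cbn [fe].
   apply sf_approx; auto. rewrite <- Hb. auto. rewrite <- Hb; auto.
 - unfold RiemannInt_SF. destruct (Rle_dec a b); [|lra]. unfold subdivision_val, subdivision, mkSF; cbn [projT1 projT2 pre].
   rewrite Int_SF_tele. rewrite <- Hb.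
   assert (f b <= f a) by (apply Hm; lra).
   rewrite Rabs_right by (apply Rle_ge; apply Rmult_le_pos; lra).
   unfold del. assert (Heps := cond_pos eps).
   apply Rmult_lt_reg_r with (INR N); auto. unfold Rdiv.
   replace ((b - a) * / INR N * (f a - f b) * INR N) with ((b - a) * (f a - f b)) by (field; lra).
   unfold K in HN. apply Rmult_lt_compat_r with (r := eps) in HN; auto.
   replace ((b - a) * (f a - f b) / eps * eps) with ((b - a) * (f a - f b)) in HN by (field; lra). lra.
Qed.

Section Int.
Variable w : R -> R.
Variable d : nat.
Hypothesis Hmono : forall r s, 0 <= r -> r <= s -> w s <= w r.
Hypothesis Hpos : forall r, 0 <= r -> 0 < w r.

Lemma pow_w_integrable R0 : 0 <= R0 -> Riemann_integrable (fun r => r ^ d * w r) 0 R0.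
Proof. intros H0.
 assert (I1 : Riemann_integrable (fun r => R0 ^ d * w r) 0 R0).
 { apply decr_integrable; auto. intros r s Hr Hrs Hs. apply Rmult_le_compat_l. apply pow_le; auto. apply Hmono; lra. }
 assert (I2 : Riemann_integrable (fun r => (R0 ^ d - r ^ d) * w r) 0 R0).
 { apply decr_integrable; auto. intros r s Hr Hrs Hs.
   assert (r ^ d <= s ^ d) by (apply pow_incr; lra). assert (s ^ d <= R0 ^ d) by (apply pow_incr; lra).
   apply Rmult_le_compat; try lra. left; apply Hpos; lra. apply Hmono; lra. }
 apply (@Riemann_integrable_ext (fun r => R0 ^ d * w r + (-1) * ((R0 ^ d - r ^ d) * w r)) (fun r => r ^ d * w r) 0 R0).
 intros; ring. apply RiemannInt_P10; auto. Qed.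

Definition J (x : R) (Hx : 0 <= x) : R := RiemannInt (pow_w_integrable x Hx).

Variable c : R.
Hypothesis Hc : 0 < c.

Definition layer (k : nat) : R := if (k <=? 1)%nat then 0 else c * (c * INR (k - 1)) ^ d * w (c * INR k).

Lemma cK_nonneg K : 0 <= c * INR K.
Proof. apply Rmult_le_pos; [lra|apply pos_INR]. Qed.

Lemma layers_le K : rsum (S K) layer <= J (c * INR K) (cK_nonneg K).
Proof. induction K.
 - unfold layer, J. simpl (rsum 1 _). simpl (0 <=? 1)%nat. cbv iota.
   assert (HH := RiemannInt_const_bound (l := 0) (u := 0) (pow_w_integrable (c * INR 0) (cK_nonneg 0)) (cK_nonneg 0)).
   assert (HH2 : forall x, 0 < x < c * INR 0 -> 0 <= x ^ d * w x <= 0) by (simpl INR; intros; lra).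
   specialize (HH HH2). lra.
 - cbn [rsum]. cbn [rsum] in IHK.
   set (pr := pow_w_integrable (c * INR (S K)) (cK_nonneg (S K))).
   assert (H0 : 0 <= c * INR K <= c * INR (S K)).
   { split. apply cK_nonneg. rewrite S_INR. lra. }
   set (pr1 := RiemannInt_P22 pr H0).
   assert (H1 : 0 <= c * INR K <= c * INR (S K)) by auto.
   set (pr2 := RiemannInt_P23 pr H1).
   assert (E : RiemannInt pr1 + RiemannInt pr2 = RiemannInt pr).
   { apply RiemannInt_P26. }
   assert (E1 : RiemannInt pr1 = J (c * INR K) (cK_nonneg K)) by apply RiemannInt_P5.
   assert (HB : (c * INR K) ^ d * w (c * INR (S K)) * (c * INR (S K) - c * INR K) <= RiemannInt pr2).
   { refine (proj1 (RiemannInt_const_bound (u := (c * INR (S K)) ^ d * w (c * INR K)) pr2 _ _)). lra.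
     intros x Hx. split.
     - apply Rmult_le_compat. apply pow_le; apply cK_nonneg. left; apply Hpos; apply cK_nonneg.
       apply pow_incr; split; [apply cK_nonneg|lra]. apply Hmono. lra. lra.
     - apply Rmult_le_compat. apply pow_le; lra. left; apply Hpos; lra.
       apply pow_incr; lra. apply Hmono. apply cK_nonneg. lra. }
   replace (c * INR (S K) - c * INR K) with c in HB by (rewrite S_INR; ring).
   unfold J. fold pr. rewrite <- E, E1.
   assert (layer (S K) <= (c * INR K) ^ d * w (c * INR (S K)) * c).
   { unfold layer. destruct (S K <=? 1)%nat.
     - apply Rmult_le_pos; [|lra]. apply Rmult_le_pos. apply pow_le; apply cK_nonneg. left; apply Hpos; apply cK_nonneg.
     - replace (S K - 1)%nat with K by lia. lra. }
   lra.
Qed.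

Lemma rsum_ind_le n m a : 0 <= a -> rsum n (fun k => if Nat.eq_dec k m then a else 0) <= a.
Proof. intros Ha. induction n; simpl. lra. destruct (Nat.eq_dec n m).
 - subst. rewrite (rsum_ext _ _ (fun _ => 0)). rewrite rsum_zero. lra.
   intros i Hi. destruct (Nat.eq_dec i m); [lia|auto].
 - lra. Qed.

Variable Bw M : R.
Hypothesis HBw : forall r, 0 <= r -> w r <= Bw.
Hypothesis HM : forall Rr (pr : Riemann_integrable (fun r => r ^ d * w r) 0 Rr), 0 <= Rr -> RiemannInt pr <= M.

Lemma terms_bound K :
  rsum K (fun k => if Nat.eq_dec k 0 then 0 else (2 * INR k + 1) ^ d * w (c * INR k))
    <= 3 ^ d * Bw + 5 ^ d / c ^ (d + 1) * M.
Proof.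
 assert (Hc' : 0 < c ^ (d+1)) by (apply pow_lt; auto).
 assert (HM0 : 0 <= M). { eapply Rle_trans. 2: apply (HM 0 (RiemannInt_P7 _ 0)); lra. rewrite RiemannInt_P9. lra. }
 assert (HB0 : 0 <= Bw). { assert (0 < w 0) by (apply Hpos; lra). assert (w 0 <= Bw) by (apply HBw; lra). lra. }
 eapply Rle_trans with (rsum K (fun k => (if Nat.eq_dec k 1 then 3 ^ d * Bw else 0) + 5 ^ d / c ^ (d+1) * layer k)).
 - apply rsum_le. intros k Hk. destruct (Nat.eq_dec k 0). subst. unfold layer; simpl; lra.
   destruct (Nat.eq_dec k 1).
   + subst. unfold layer. simpl (1 <=? 1)%nat. cbv iota. rewrite Rmult_0_r, Rplus_0_r.
     replace (2 * INR 1 + 1) with 3 by (simpl; lra). apply Rmult_le_compat_l. apply pow_le; lra. apply HBw.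
     apply Rmult_le_pos; [lra|apply pos_INR].
   + rewrite Rplus_0_l. unfold layer. destruct (k <=? 1)%nat eqn:E. apply Nat.leb_le in E; lia.
     rewrite minus_INR by lia. simpl (INR 1).
     assert (Hk2 : 2 <= INR k). { replace 2 with (INR 2) by (simpl; lra). apply le_INR. lia. }
     assert (0 < w (c * INR k)) by (apply Hpos; apply cK_nonneg).
     replace (5 ^ d / c ^ (d + 1) * (c * (c * (INR k - 1)) ^ d * w (c * INR k)))
       with ((5 * (INR k - 1)) ^ d * w (c * INR k)).
     2:{ rewrite pow_add, !Rpow_mult_distr. field. repeat split; try (apply pow_nonzero); lra. }
     apply Rmult_le_compat_r. lra. apply pow_incr. lra.
 - rewrite rsum_plus, rsum_scal.
   assert (rsum K (fun k => if Nat.eq_dec k 1 then 3 ^ d * Bw else 0) <= 3 ^ d * Bw).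
   { apply rsum_ind_le. apply Rmult_le_pos; auto. apply pow_le; lra. }
   assert (rsum K layer <= M).
   { destruct K. simpl; auto. eapply Rle_trans. apply layers_le. apply HM. apply cK_nonneg. }
   assert (0 <= 5 ^ d / c ^ (d+1)). { apply Rle_mult_inv_pos; auto. apply pow_le; lra. }
   assert (5 ^ d / c ^ (d + 1) * rsum K layer <= 5 ^ d / c ^ (d + 1) * M) by (apply Rmult_le_compat_l; auto).
   lra.
Qed.

End Int.

Lemma rsuml_seq n f : rsuml (map f (seq 0 n)) = rsum n f.
Proof. induction n. simpl; auto. cbn [rsum]. rewrite seq_S, map_app, rsuml_app, IHn. simpl. ring. Qed.

Lemma rsuml_const {T} (l : list T) a : rsuml (map (fun _ => a) l) = INR (length l) * a.
Proof. induction l; simpl. ring. rewrite IHl. destruct (length l); simpl; ring. Qed.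

Lemma filter_ninf_count d k P : NoDup P -> Forall (nzsite d) P ->
  INR (length (filter (fun r => if Nat.eq_dec (ninf r) k then true else false) P)) <= (2 * INR k + 1) ^ d.
Proof. intros HN HF.
 replace ((2 * INR k + 1) ^ d) with (INR (length (cube d k))).
 2:{ rewrite cube_length, pow_INR, plus_INR, mult_INR. replace (INR 2) with 2 by (simpl; lra). simpl (INR 1). auto. }
 apply le_INR. apply NoDup_incl_length. apply NoDup_filter; auto.
 intros r Hr. apply filter_In in Hr. destruct Hr as [Hr1 Hr2].
 destruct (Nat.eq_dec (ninf r) k); try discriminate. rewrite Forall_forall in HF. destruct (HF r Hr1).
 apply cube_In; auto. lia. Qed.

Lemma W_sum d A (w : R -> R) Kb Bw M :
  (forall r s, 0 <= r -> r <= s -> w s <= w r) -> (forall r, 0 <= r -> 0 < w r) ->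
  (forall r, 0 <= r -> w r <= Bw) ->
  (forall Rr (pr : Riemann_integrable (fun r => r ^ d * w r) 0 Rr), 0 <= Rr -> RiemannInt pr <= M) ->
  0 < Kb -> (forall r, site d r -> INR (ninf r) <= Kb * vnorm d (pos d A r)) ->
  exists K0, forall P, NoDup P -> Forall (nzsite d) P ->
    rsuml (map (fun r => w (vnorm d (pos d A r))) P) <= K0.
Proof. intros Hmono Hpos HBw HM HKb Hcoer.
 set (c := / Kb). assert (Hc : 0 < c) by (apply Rinv_0_lt_compat; auto).
 exists (3 ^ d * Bw + 5 ^ d / c ^ (d + 1) * M). intros P HN HF.
 set (F := fun k => w (c * INR k)).
 apply Rle_trans with (rsuml (map (fun r => F (ninf r)) P)).
 { apply rsuml_map_le. intros r Hr. rewrite Forall_forall in HF. destruct (HF r Hr) as [Hs _].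
   unfold F. apply Hmono. apply Rmult_le_pos. lra. apply pos_INR.
   specialize (Hcoer r Hs). unfold c. apply (Rmult_le_reg_l Kb); auto.
   rewrite <- Rmult_assoc, Rinv_r, Rmult_1_l by lra. auto. }
 set (Kmax := S (fold_right Nat.max O (map ninf P))).
 eapply Rle_trans. apply (rsuml_group Nat.eq_dec ninf _ P (seq 0 Kmax)).
 { intros; unfold F; left; apply Hpos. apply Rmult_le_pos. lra. apply pos_INR. }
 { intros x Hx Hn. exfalso. apply Hn. apply in_seq. split. lia. unfold Kmax.
   assert (ninf x <= fold_right Nat.max O (map ninf P))%nat.
   { clear -Hx. induction P; simpl in *. tauto. destruct Hx as [<-|Hx]. lia. specialize (IHP Hx). lia. }
   lia. }
 rewrite (rsuml_map_ext _ (fun k => INR (length (filter (fun x => if Nat.eq_dec (ninf x) k then true else false) P)) * F k)).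
 2:{ intros k _. rewrite <- rsuml_const. apply rsuml_map_ext. intros x Hx. apply filter_In in Hx.
     destruct Hx as [_ Hx]. destruct (Nat.eq_dec (ninf x) k); try discriminate. rewrite e. auto. }
 rewrite rsuml_seq.
 eapply Rle_trans; [|apply (terms_bound w d Hmono Hpos c Hc Bw M HBw HM Kmax)].
 apply rsum_le. intros k Hk. destruct (Nat.eq_dec k 0).
 - subst. rewrite (filter_ext_in _ (fun _ => false)). assert (filter (fun _ : list Z => false) P = []) as -> by (clear; induction P; simpl; auto). simpl length. destruct (Nat.eq_dec 0 0); [|lia]. simpl INR. lra.
   intros r Hr. rewrite Forall_forall in HF. assert (H1 := nzsite_ninf d r (HF r Hr)).
   destruct (Nat.eq_dec (ninf r) 0); auto. lia.
 - unfold F. apply Rmult_le_compat_r. left; apply Hpos. apply Rmult_le_pos. lra. apply pos_INR.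
   apply filter_ninf_count; auto.
Qed.

Definition g0 : G := fun _ _ => 0.
Definition Dd (DV : list (list Z * nat) -> G -> R) (r : list Z) (i : nat) : R := DV [(r, i)] g0.

Lemma antisym d n V DV r i : (1 <= n)%nat -> SR d n V DV -> SPS V -> nzsite d r -> (i < d)%nat ->
  Dd DV (zneg r) i = - Dd DV r i.
Proof. intros Hn [H0 HSR] HPS Hr Hi. unfold Dd.
 assert (D1 := HSR nil ltac:(simpl; lia) (Forall_nil _) r i (conj Hr Hi) g0).
 assert (D2 := HSR nil ltac:(simpl; lia) (Forall_nil _) (zneg r) i (conj (nzsite_zneg d r Hr) Hi) g0).
 rewrite H0 in D1, D2.
 assert (E : forall t, V (upd g0 r i t) = V (upd g0 (zneg r) i (- t))).
 { intros t. rewrite <- HPS. f_equal. apply functional_extensionality; intros rho.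
   apply functional_extensionality; intros j. unfold upd, g0.
   destruct (list_eq_dec Z.eq_dec (zneg rho) r), (list_eq_dec Z.eq_dec rho (zneg r)).
   - destruct (Nat.eq_dec j i); lra.
   - exfalso. apply n0. rewrite <- e, zneg_zneg. auto.
   - exfalso. apply n0. rewrite e, zneg_zneg. auto.
   - lra. }
 assert (D3 : derivable_pt_lim (fun t => V (upd g0 (zneg r) i (- t))) 0 (DV [(zneg r, i)] g0 * (-1))).
 { apply (derivable_pt_lim_comp (fun t => - t) (fun s => V (upd g0 (zneg r) i s))).
   replace (-1) with (- 1) by ring. apply derivable_pt_lim_opp. apply derivable_pt_lim_id.
   rewrite Ropp_0. auto. }
 assert (D4 : derivable_pt_lim (fun t => V (upd g0 r i t)) 0 (DV [(zneg r, i)] g0 * (-1))).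
 { eapply derivable_pt_lim_ext; [|apply D3]. intros; rewrite E; auto. }
 assert (U := uniqueness_limite _ _ _ _ D1 D4). lra.
Qed.

Lemma SL_bound_one d A w r : SL_bound d A w [r] = w 1%nat (vnorm d (pos d A r)).
Proof. unfold SL_bound. simpl. unfold block_term. simpl. unfold delta.
 destruct (list_eq_dec Z.eq_dec r r); [|congruence]. ring. Qed.

Lemma D_bound d A n DV B : (1 <= n)%nat -> SL d A n DV -> inv_mat d A B ->
  exists w1 C, in_L d 1 w1 /\ 0 <= C /\
    forall r i, nzsite d r -> (i < d)%nat -> Rabs (Dd DV r i) <= C * w1 (vnorm d (pos d A r)).
Proof. intros Hn [w [Hw HSL]] HI.
 destruct (lat_covering d A B HI) as [lam [Hlam Hcov]].
 destruct (HSL 1 lam ltac:(lra) Hlam 1%nat ltac:(lia)) as [C HC].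
 exists (w 1%nat), (Rmax C 0). split. apply Hw; lia. split. apply Rmax_r.
 intros r i Hr Hi.
 assert (Hin : inA d A 1 lam (fun l' i => pos d A l' i + (fun _ _ => 0) l' i)).
 { split.
   - intros z. destruct (Hcov z) as [l [Hl Hl']]. exists l. split; auto.
     rewrite (vnorm_ext _ _ (fun i => pos d A l i - z i)); auto. intros; ring.
   - intros l l' _ _. rewrite (vnorm_ext _ _ (fun i => pos d A l i - pos d A l' i)). lra. intros; ring. }
 assert (Hz : site d (zero_site d)) by apply zero_site_length.
 specialize (HC (fun _ _ => 0) (zero_site d) [r] [i] Hin Hz eq_refl ltac:(constructor; [exact Hr|constructor]) eq_refl
   ltac:(constructor; [exact Hi|constructor])).
 simpl combine in HC. rewrite SL_bound_one in HC.
 replace (Dw (fun _ _ => 0) (zero_site d)) with g0 in HC.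
 2:{ unfold Dw, g0. apply functional_extensionality; intros; apply functional_extensionality; intros. ring. }
 unfold Dd. eapply Rle_trans. apply HC. apply Rmult_le_compat_r.
 destruct (Hw 1%nat ltac:(lia)) as [_ [Hp _]]. left. apply Hp. apply vnorm_nonneg.
 apply Rmax_l.
Qed.

Lemma rsum_const n a : rsum n (fun _ => a) = INR n * a.
Proof. induction n; simpl. ring. rewrite IHn. destruct n; simpl; ring. Qed.

Lemma D_summable d A n DV B : (1 <= n)%nat -> SL d A n DV -> inv_mat d A B ->
  exists KD, forall P, NoDup P -> Forall (nzsite d) P ->
    rsuml (map (fun r => rsum d (fun i => Rabs (Dd DV r i))) P) <= KD.
Proof. intros Hn HSL HI.
 destruct (D_bound d A n DV B Hn HSL HI) as [w1 [C [[Hm [Hp [[Bw HB] [M HM]]]] [HC HD]]]].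
 replace (1 + d - 1)%nat with d in HM by lia.
 destruct (coercive d A B HI) as [Kb [HKb Hco]].
 destruct (W_sum d A w1 Kb Bw M Hm Hp HB HM HKb Hco) as [K0 HK0].
 exists (INR d * C * K0). intros P HN HF.
 apply Rle_trans with (rsuml (map (fun r => INR d * C * w1 (vnorm d (pos d A r))) P)).
 { apply rsuml_map_le. intros r Hr. rewrite Forall_forall in HF.
   apply Rle_trans with (rsum d (fun _ => C * w1 (vnorm d (pos d A r)))).
   apply rsum_le. intros; apply HD; auto.
   rewrite rsum_const. lra. }
 rewrite rsuml_scal. apply Rmult_le_compat_l. apply Rmult_le_pos; auto. apply pos_INR.
 apply HK0; auto.
Qed.

Lemma rsuml_split {T} (p : T -> bool) (f : T -> R) l :
  rsuml (map f l) = rsuml (map f (filter p l)) + rsuml (map f (filter (fun x => negb (p x)) l)).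
Proof. rewrite !rsuml_filter, <- rsuml_plus. apply rsuml_map_ext. intros x _. destruct (p x); simpl; ring. Qed.

Lemma sup_approx (S : R -> Prop) KD eps : (forall s, S s -> s <= KD) -> S 0 -> 0 < eps ->
  exists sig, (forall s, S s -> s <= sig) /\ exists s, S s /\ sig - eps < s.
Proof. intros HB H0 He.
 destruct (completeness S) as [sig [Hub Hlub]]. exists KD; intros s Hs; apply HB; auto. exists 0; auto.
 exists sig. split. auto. apply NNPP. intros Hn.
 assert (sig <= sig - eps). { apply Hlub. intros s Hs. apply Rnot_lt_le. intros Hl. apply Hn. exists s; auto. }
 lra. Qed.

Lemma tail_lemma d (h : list Z -> R) KD :
  (forall P, NoDup P -> Forall (nzsite d) P -> rsuml (map (fun r => Rabs (h r)) P) <= KD) ->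
  (forall r, nzsite d r -> h (zneg r) = - h r) ->
  forall eps, 0 < eps -> exists J, NoDup J /\ Forall (nzsite d) J /\
    forall P, NoDup P -> Forall (nzsite d) P -> incl J P -> Rabs (rsuml (map h P)) < eps.
Proof. intros HS HA eps He.
 set (S := fun s => exists P, NoDup P /\ Forall (nzsite d) P /\ s = rsuml (map (fun r => Rabs (h r)) P)).
 destruct (sup_approx S KD (eps/2)) as [sig [Hsig [s [[P1 [HN1 [HF1 ->]]] Hs]]]].
 { intros s [P [HN [HF ->]]]. apply HS; auto. }
 { exists nil. repeat split; auto. constructor. }
 lra.
 set (J := nodup zdec (P1 ++ map zneg P1)).
 assert (HJF : Forall (nzsite d) J).
 { rewrite Forall_forall in *. intros x Hx. apply nodup_In, in_app_or in Hx. destruct Hx as [Hx|Hx]. auto.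
   apply in_map_iff in Hx. destruct Hx as [y [<- Hy]]. apply nzsite_zneg; auto. }
 assert (HJc : forall x, In x J -> In (zneg x) J).
 { intros x Hx. unfold J in *. apply nodup_In in Hx. apply nodup_In. apply in_app_or in Hx. apply in_or_app.
   destruct Hx as [Hx|Hx]. right. apply in_map; auto. left. apply in_map_iff in Hx. destruct Hx as [y [<- Hy]].
   rewrite zneg_zneg; auto. }
 assert (HJ0 : rsuml (map h J) = 0).
 { assert (Hp : Permutation J (map zneg J)).
   { apply NoDup_Permutation. apply NoDup_nodup. apply NoDup_map_on. apply NoDup_nodup.
     intros x y _ _ E. rewrite <- (zneg_zneg x), E, zneg_zneg; auto.
     intros x; split; intros Hx. rewrite <- (zneg_zneg x). apply in_map. auto.
     apply in_map_iff in Hx. destruct Hx as [y [<- Hy]]. auto. }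
   assert (E := rsuml_perm h _ _ Hp). rewrite rsuml_map_map in E.
   rewrite (rsuml_map_ext (fun x => h (zneg x)) (fun x => - h x)) in E. rewrite rsuml_opp in E. lra.
   intros x Hx. apply HA. rewrite Forall_forall in HJF; auto. }
 exists J. split. apply NoDup_nodup. split. auto.
 intros P HN HF HI.
 set (p := fun x => if in_dec zdec x J then true else false).
 rewrite (rsuml_split p).
 assert (Ein : rsuml (map h (filter p P)) = rsuml (map h J)).
 { apply rsuml_perm. apply NoDup_Permutation. apply NoDup_filter; auto. apply NoDup_nodup.
   intros x; split; intros Hx. apply filter_In in Hx. destruct Hx as [_ Hx]. unfold p in Hx.
   destruct (in_dec zdec x J); auto; discriminate.
   apply filter_In. split. apply HI; auto. unfold p. destruct (in_dec zdec x J); auto. }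
 rewrite Ein, HJ0, Rplus_0_l.
 set (Po := filter (fun x => negb (p x)) P).
 assert (HPo : NoDup Po) by (apply NoDup_filter; auto).
 assert (HPoF : Forall (nzsite d) Po).
 { rewrite Forall_forall in *. intros x Hx. apply filter_In in Hx. apply HF; tauto. }
 assert (Hdis : forall a, In a P1 -> ~ In a Po).
 { intros a Ha Hb. apply filter_In in Hb. destruct Hb as [_ Hb]. unfold p in Hb.
   destruct (in_dec zdec a J). discriminate. apply n. apply nodup_In. apply in_or_app; auto. }
 assert (Hall : rsuml (map (fun r => Rabs (h r)) (P1 ++ Po)) <= sig).
 { apply Hsig. exists (P1 ++ Po). split. apply NoDup_app; auto. split. apply Forall_app; auto. auto. }
 rewrite map_app, rsuml_app in Hall.
 eapply Rle_lt_trans. apply rsuml_abs. lra.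
Qed.

Section Main.
Variable d : nat.
Variable DV : list (list Z * nat) -> G -> R.
Variable u : list Z -> nat -> R.
Variable c0 : nat -> R.
Variable C : list (list Z).
Variable KD : R.
Hypothesis HC : NoDup C.
Hypothesis HCs : Forall (site d) C.
Hypothesis Hsupp : forall l, site d l -> ~ In l C -> forall i, (i < d)%nat -> u l i = c0 i.
Definition Dabs r := rsum d (fun i => Rabs (Dd DV r i)).
Hypothesis HKD : forall P, NoDup P -> Forall (nzsite d) P -> rsuml (map Dabs P) <= KD.
Hypothesis HA : forall r i, nzsite d r -> (i < d)%nat -> Dd DV (zneg r) i = - Dd DV r i.

Definition v l i := u l i - c0 i.
Definition Vabs l := rsum d (fun i => Rabs (v l i)).

Lemma Vabs_nonneg l : 0 <= Vabs l.
Proof. apply rsum_nonneg; intros; apply Rabs_pos. Qed.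

Lemma v_zero l i : site d l -> ~ In l C -> (i < d)%nat -> v l i = 0.
Proof. intros. unfold v. rewrite Hsupp; auto. ring. Qed.

Lemma Vabs_zero l : site d l -> ~ In l C -> Vabs l = 0.
Proof. intros. unfold Vabs. rewrite (rsum_ext _ _ (fun _ => 0)). apply rsum_zero.
 intros. rewrite v_zero; auto. apply Rabs_R0. Qed.

Lemma fterm_eq l r : fterm d DV u l r = rsum d (fun i => Dd DV r i * (v (zadd l r) i - v l i)).
Proof. unfold fterm. apply rsum_ext. intros. unfold v, Dd, g0. ring. Qed.

Lemma Dabs_nonneg r : 0 <= Dabs r.
Proof. apply rsum_nonneg; intros; apply Rabs_pos. Qed.

Lemma KD_nonneg : 0 <= KD.
Proof. eapply Rle_trans; [|apply (HKD nil)]. simpl; lra. constructor. constructor. Qed.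

Lemma fterm_abs l r : Rabs (fterm d DV u l r) <= Dabs r * (Vabs (zadd l r) + Vabs l).
Proof. rewrite fterm_eq. eapply Rle_trans. apply rsum_abs.
 unfold Dabs. rewrite Rmult_comm, <- rsum_scal. apply rsum_le. intros i Hi.
 rewrite Rabs_mult. rewrite Rmult_comm. apply Rmult_le_compat_r. apply Rabs_pos.
 eapply Rle_trans. apply Rabs_triang. rewrite Rabs_Ropp. unfold Vabs.
 assert (Rabs (v (zadd l r) i) <= rsum d (fun i => Rabs (v (zadd l r) i))) by
   (apply (rsum_single_le d (fun i => Rabs (v (zadd l r) i))); auto; intros; apply Rabs_pos).
 assert (Rabs (v l i) <= rsum d (fun i => Rabs (v l i))) by
   (apply (rsum_single_le d (fun i => Rabs (v l i))); auto; intros; apply Rabs_pos).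
 lra. Qed.

Lemma group_bound (L : list (list Z * list Z)) (key : list Z * list Z -> list Z) :
  NoDup L -> (forall p q, In p L -> In q L -> key p = key q -> snd p = snd q -> p = q) ->
  (forall p, In p L -> nzsite d (snd p)) -> (forall p, In p L -> site d (key p)) ->
  rsuml (map (fun p => Dabs (snd p) * Vabs (key p)) L) <= KD * rsuml (map Vabs C).
Proof. intros HN Hinj Hnz Hs.
 eapply Rle_trans. apply (rsuml_group zdec key _ L C).
 { intros; apply Rmult_le_pos; [apply Dabs_nonneg|apply Vabs_nonneg]. }
 { intros p Hp Hn. rewrite Vabs_zero; auto. ring. }
 rewrite <- rsuml_scal. apply rsuml_map_le. intros m Hm.
 rewrite (rsuml_map_ext _ (fun p => Vabs m * Dabs (snd p))).
 2:{ intros p Hp. apply filter_In in Hp. destruct Hp as [_ Hp]. destruct (zdec (key p) m); try discriminate.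
     rewrite e; ring. }
 rewrite rsuml_scal, Rmult_comm. apply Rmult_le_compat_r. apply Vabs_nonneg.
 rewrite <- rsuml_map_map. apply HKD.
 - apply NoDup_map_on. apply NoDup_filter; auto. intros p q Hp Hq E.
   apply filter_In in Hp. apply filter_In in Hq. destruct Hp as [Hp Hp'], Hq as [Hq Hq'].
   destruct (zdec (key p) m), (zdec (key q) m); try discriminate. apply Hinj; auto. congruence.
 - apply Forall_forall. intros r Hr. apply in_map_iff in Hr. destruct Hr as [p [<- Hp]].
   apply filter_In in Hp. apply Hnz; tauto.
Qed.

Lemma part1 : summable_on (fun p : list Z * list Z => site d (fst p) /\ nzsite d (snd p))
                (fun p => fterm d DV u (fst p) (snd p)).
Proof. exists (2 * (KD * rsuml (map Vabs C))). intros L HN HF. rewrite Forall_forall in HF.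
 eapply Rle_trans. apply rsuml_map_le. intros p _. apply fterm_abs.
 rewrite (rsuml_map_ext _ (fun p => Dabs (snd p) * Vabs (zadd (fst p) (snd p)) + Dabs (snd p) * Vabs (fst p)))
   by (intros; ring).
 rewrite rsuml_plus.
 assert (H1 := group_bound L (fun p => zadd (fst p) (snd p)) HN).
 assert (H2 := group_bound L fst HN).
 cut (rsuml (map (fun p => Dabs (snd p) * Vabs (zadd (fst p) (snd p))) L) <= KD * rsuml (map Vabs C) /\
      rsuml (map (fun p => Dabs (snd p) * Vabs (fst p)) L) <= KD * rsuml (map Vabs C)). lra.
 split; [apply H1|apply H2].
 - intros [l r] [l' r'] Hp Hq E E'. simpl in *. subst r'.
   destruct (HF _ Hp) as [Hl [Hr _]], (HF _ Hq) as [Hl' _]. simpl in *.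
   unfold site in *. f_equal.
   assert (E1 : zsub (zadd r l) r = l) by (apply zsub_zadd; lia).
   assert (E2 : zsub (zadd r l') r = l') by (apply zsub_zadd; lia).
   rewrite <- E1, <- E2, (zadd_comm r l), (zadd_comm r l'), E. auto.
 - intros p Hp; apply HF; auto.
 - intros p Hp. destruct (HF p Hp) as [Hl [Hr _]]. apply site_zadd; auto.
 - intros [l r] [l' r'] Hp Hq E E'. simpl in *. subst; auto.
 - intros p Hp; apply HF; auto.
 - intros p Hp; apply HF; auto.
Qed.

Lemma tail_all eps : 0 < eps -> exists J, NoDup J /\ Forall (nzsite d) J /\
  forall i, (i < d)%nat -> forall P, NoDup P -> Forall (nzsite d) P -> incl J P ->
    Rabs (rsuml (map (fun r => Dd DV r i) P)) < eps.
Proof. intros He.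
 assert (Hk : forall k, (k <= d)%nat -> exists J, NoDup J /\ Forall (nzsite d) J /\
  forall i, (i < k)%nat -> forall P, NoDup P -> Forall (nzsite d) P -> incl J P ->
    Rabs (rsuml (map (fun r => Dd DV r i) P)) < eps).
 { induction k; intros Hkd.
   - exists nil. repeat split; auto. constructor. intros; lia.
   - destruct IHk as [J1 [HN1 [HF1 H1]]]. lia.
     assert (HS2 : forall P, NoDup P -> Forall (nzsite d) P -> rsuml (map (fun r => Rabs (Dd DV r k)) P) <= KD).
     { intros P HN HF. eapply Rle_trans; [|apply (HKD P HN HF)]. apply rsuml_map_le. intros r _.
       apply (rsum_single_le d (fun i => Rabs (Dd DV r i))). lia. intros; apply Rabs_pos. }
     assert (HA2 : forall r, nzsite d r -> Dd DV (zneg r) k = - Dd DV r k).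
     { intros r Hr. apply HA; [auto|lia]. }
     destruct (tail_lemma d (fun r => Dd DV r k) KD HS2 HA2 eps He) as [J2 [HN2 [HF2 H2]]].
     exists (nodup zdec (J1 ++ J2)). split. apply NoDup_nodup. split.
       apply Forall_forall. intros x Hx. apply nodup_In, in_app_or in Hx. rewrite Forall_forall in *. destruct Hx; auto.
       intros i Hi P HN HF HI. destruct (Nat.eq_dec i k).
       * subst. apply H2; auto. intros x Hx. apply HI. apply nodup_In. apply in_or_app; auto.
       * apply H1; auto. lia. intros x Hx. apply HI. apply nodup_In. apply in_or_app; auto. }
 apply Hk. lia. Qed.

Definition s l := rsum d (fun i => rsuml (map (fun m => if zdec m l then 0 else Dd DV (zsub m l) i * v m i) C)).

Lemma part2a l : site d l -> has_sum (nzsite d) (fun r => fterm d DV u l r) (s l).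
Proof. intros Hl eps He.
 assert (HV := Vabs_nonneg l).
 set (e' := eps / (Vabs l + 1)).
 assert (He' : 0 < e') by (unfold e'; apply Rdiv_lt_0_compat; lra).
 destruct (tail_all e' He') as [J [HJN [HJF HJ]]].
 set (Q := map (fun m => zsub m l) (filter (fun m => if zdec m l then false else true) C)).
 rewrite Forall_forall in HCs.
 assert (HQF : forall r, In r Q -> nzsite d r).
 { intros r Hr. apply in_map_iff in Hr. destruct Hr as [m [<- Hm]]. apply filter_In in Hm. destruct Hm as [Hm Hm'].
   destruct (zdec m l); try discriminate. assert (Hs := HCs m Hm). split. apply site_zsub; auto.
   unfold site in *. rewrite <- Hs. apply zsub_nz; auto. lia. }
 assert (HQN : NoDup Q).
 { apply NoDup_map_on. apply NoDup_filter; auto. intros m m' Hm Hm' E.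
   apply filter_In in Hm. apply filter_In in Hm'.
   assert (Hs := HCs m (proj1 Hm)). assert (Hs' := HCs m' (proj1 Hm')). unfold site in *.
   rewrite <- (zadd_zsub l m), <- (zadd_zsub l m'), E; auto; lia. }
 exists (nodup zdec (Q ++ J)). split. apply NoDup_nodup. split.
 { apply Forall_forall. intros x Hx. apply nodup_In, in_app_or in Hx. rewrite Forall_forall in HJF. destruct Hx; auto. }
 intros P HN HF HI. rewrite Forall_forall in HF.
 rewrite (rsuml_map_ext _ (fun r => rsum d (fun i => Dd DV r i * v (zadd l r) i - v l i * Dd DV r i))).
 2:{ intros r _. rewrite fterm_eq. apply rsum_ext. intros; ring. }
 rewrite rsuml_rsum. unfold s. rewrite <- rsum_minus.
 rewrite (rsum_ext _ _ (fun i => - (v l i * rsuml (map (fun r => Dd DV r i) P)))).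
 - eapply Rle_lt_trans. apply rsum_abs.
   apply Rle_lt_trans with (rsum d (fun i => Rabs (v l i) * e')).
   + apply rsum_le. intros i Hi. rewrite Rabs_Ropp, Rabs_mult. apply Rmult_le_compat_l. apply Rabs_pos.
     left. apply HJ; auto. apply Forall_forall; auto. intros x Hx. apply HI. apply nodup_In. apply in_or_app; auto.
   + rewrite (rsum_ext _ _ (fun i => e' * Rabs (v l i))) by (intros; ring). rewrite rsum_scal.
     fold (Vabs l). unfold e'. apply (Rmult_lt_reg_r (Vabs l + 1)). lra.
     replace (eps / (Vabs l + 1) * Vabs l * (Vabs l + 1)) with (eps * Vabs l) by (field; lra). nra.
 - intros i Hi. rewrite rsuml_minus, rsuml_scal.
   enough (rsuml (map (fun r => Dd DV r i * v (zadd l r) i) P) =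
           rsuml (map (fun m => if zdec m l then 0 else Dd DV (zsub m l) i * v m i) C)) by lra.
   rewrite (rsuml_sub zdec _ P Q); auto.
   + unfold Q. rewrite rsuml_map_map, rsuml_filter. apply rsuml_map_ext. intros m Hm.
     destruct (zdec m l). auto. rewrite zadd_zsub; auto. assert (Hs := HCs m Hm). unfold site in *; lia.
   + intros x Hx. apply HI. apply nodup_In. apply in_or_app; auto.
   + intros r Hr HnQ. destruct (HF r Hr) as [Hrs Hr0].
     rewrite v_zero; [ring| apply site_zadd; auto | |auto].
     intros Hin. apply HnQ. unfold Q. apply in_map_iff. exists (zadd l r). split.
     apply zsub_zadd. unfold site in *; lia.
     apply filter_In. split; auto. destruct (zdec (zadd l r) l); auto. exfalso. apply Hr0.
     rewrite <- (zsub_zadd l r), e, zsub_self. unfold site in *. rewrite Hl. auto. unfold site in *; lia.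
Qed.

Lemma part2b : has_sum (site d) s 0.
Proof. intros eps He.
 set (SV := rsuml (map Vabs C)).
 assert (HSV : 0 <= SV) by (apply rsuml_map_nonneg; intros; apply Vabs_nonneg).
 set (e' := eps / (SV + 1)).
 assert (He' : 0 < e') by (unfold e'; apply Rdiv_lt_0_compat; lra).
 destruct (tail_all e' He') as [J [HJN [HJF HJ]]].
 rewrite Forall_forall in HCs, HJF.
 exists (nodup zdec (flat_map (fun m => map (fun r => zsub m r) J) C)).
 split. apply NoDup_nodup. split.
 { apply Forall_forall. intros x Hx. apply nodup_In, in_flat_map in Hx. destruct Hx as [m [Hm Hx]].
   apply in_map_iff in Hx. destruct Hx as [r [<- Hr]]. apply site_zsub; auto. apply HJF; auto. }
 intros L HN HF HI. rewrite Forall_forall in HF. rewrite Rminus_0_r. unfold s.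
 rewrite rsuml_rsum.
 apply Rle_lt_trans with (rsum d (fun i => rsuml (map (fun m => Rabs (v m i) * e') C))).
 - eapply Rle_trans. apply rsum_abs. apply rsum_le. intros i Hi.
   rewrite rsuml_swap. eapply Rle_trans. apply rsuml_abs. apply rsuml_map_le. intros m Hm.
   assert (Hms := HCs m Hm).
   set (Pm := map (zsub m) (filter (fun l => if zdec m l then false else true) L)).
   assert (E : rsuml (map (fun l => if zdec m l then 0 else Dd DV (zsub m l) i * v m i) L) =
               v m i * rsuml (map (fun r => Dd DV r i) Pm)).
   { unfold Pm. rewrite rsuml_map_map, rsuml_filter, <- rsuml_scal. apply rsuml_map_ext. intros l _.
     destruct (zdec m l); ring. }
   rewrite E, Rabs_mult. apply Rmult_le_compat_l. apply Rabs_pos. left. apply HJ; auto.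
   + apply NoDup_map_on. apply NoDup_filter; auto. intros a b Ha Hb Eab.
     apply filter_In in Ha. apply filter_In in Hb. assert (Has := HF a (proj1 Ha)). assert (Hbs := HF b (proj1 Hb)).
     unfold site in *. apply (zsub_inj m); auto; lia.
   + apply Forall_forall. intros r Hr. unfold Pm in Hr. apply in_map_iff in Hr. destruct Hr as [l [<- Hl]].
     apply filter_In in Hl. destruct Hl as [Hl Hl']. destruct (zdec m l); try discriminate.
     assert (Hls := HF l Hl). split. apply site_zsub; auto. unfold site in *. rewrite <- Hms. apply zsub_nz. lia. auto.
   + intros r Hr. assert (Hr' := HJF r Hr). destruct Hr' as [Hrs Hr0]. unfold Pm. apply in_map_iff.
     exists (zsub m r). split. apply zsub_zsub. unfold site in *; lia.
     apply filter_In. split. apply HI. apply nodup_In. apply in_flat_map. exists m. split; auto. apply in_map; auto.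
     destruct (zdec m (zsub m r)); auto. exfalso. apply Hr0.
     assert (E2 : zsub m (zsub m r) = r) by (apply zsub_zsub; unfold site in *; lia).
     rewrite <- E2, <- e, zsub_self. unfold site in *. rewrite Hms. auto.
 - rewrite <- rsuml_rsum. rewrite (rsuml_map_ext _ (fun m => e' * Vabs m)).
   2:{ intros m _. unfold Vabs. rewrite <- rsum_scal. apply rsum_ext. intros; ring. }
   rewrite rsuml_scal. fold SV. unfold e'. apply (Rmult_lt_reg_r (SV + 1)). lra.
   replace (eps / (SV + 1) * SV * (SV + 1)) with (eps * SV) by (field; lra). nra.
Qed.

End Main.

Theorem mainTheorem3 (d : nat) (A : nat -> nat -> R) (n : nat)
    (V : G -> R) (DV : list (list Z * nat) -> G -> R) :
  (d = 2%nat \/ d = 3%nat) -> nonsingular d A -> (3 <= n)%nat ->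
  respects d V -> SR d n V DV -> SL d A n DV -> SPS V ->
  forall u : list Z -> nat -> R, const_outside_ball d A u ->
    summable_on (fun p : list Z * list Z => site d (fst p) /\ nzsite d (snd p))
                (fun p => fterm d DV u (fst p) (snd p)) /\
    exists s : list Z -> R,
      (forall l, site d l -> has_sum (nzsite d) (fun rho => fterm d DV u l rho) (s l)) /\
      has_sum (site d) s 0.
Proof.
 intros Hd Hns Hn _ HSR HSL HPS u [Rr [c0 Hc]].
 destruct (inv_exists d A Hd Hns) as [B HI].
 destruct (D_summable d A n DV B ltac:(lia) HSL HI) as [KD HKD].
 destruct (coercive d A B HI) as [Kb [HKb Hco]].
 set (N0 := Z.to_nat (up (Kb * Rr))).
 set (Cl := nodup zdec (cube d N0)).
 assert (HC : NoDup Cl) by apply NoDup_nodup.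
 assert (HCs : Forall (site d) Cl).
 { apply Forall_forall. intros x Hx. apply nodup_In in Hx. eapply cube_site; eauto. }
 assert (Hsupp : forall l, site d l -> ~ In l Cl -> forall i, (i < d)%nat -> u l i = c0 i).
 { intros l Hl Hn' i Hi. apply Hc; auto.
   assert (Hgt : (N0 < ninf l)%nat).
   { destruct (Nat.lt_ge_cases N0 (ninf l)); auto. exfalso. apply Hn'. apply nodup_In. apply cube_In; auto. }
   apply lt_INR in Hgt.
   assert (H1 : IZR (up (Kb * Rr)) <= INR N0) by apply INR_to_nat_ge.
   destruct (archimed (Kb * Rr)) as [H2 _].
   specialize (Hco l Hl).
   apply Rle_ge. apply (Rmult_le_reg_l Kb); auto. lra. }
 assert (HA : forall r i, nzsite d r -> (i < d)%nat -> Dd DV (zneg r) i = - Dd DV r i).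
 { intros r i Hr Hi. apply (antisym d n V DV); auto. lia. }
 split.
 - eapply part1; eauto.
 - exists (s d DV u c0 Cl). split.
   + eapply part2a; eauto.
   + eapply part2b; eauto.
Qed.
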